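(* Let $K$ be a field and $f\in K(z)$ a rational function of degree $d\ge2$. For every $1\le n\le\infty$, $$G_\infty(K,f,t)=G_n^K,$$ where $G_n^K:=\{g\in G_\infty(K,f,t): (g|_v)(g|_w)^{-1}\in G_\infty(L_n,f,t)\text{ for all vertices }v,w\in T\}$.
   Context: Let $t$ be transcendental over $K$; $T:=\bigsqcup_{m\ge0}f^{-m}(t)$ is the $d$-adic tree of iterated preimages (each $x\in f^{-(m+1)}(t)$ joined to $f(x)$). For a field $L$ with $K\subseteq L\subseteq K^{\mathrm{sep}}$, $G_\infty(L,f,t)\le\mathrm{Aut}~T$ is the image of the natural action of $\mathrm{Gal}(L(t)^{\mathrm{sep}}/L(t))$ on $T$. $K_n(f,t)$ is the splitting field over $K(t)$ of $\{f^k\}_{k\le n}$ ($K_\infty(f,t)$ that of all iterates), and $L_n:=K^{\mathrm{sep}}\cap K_n(f,t)$, so that $G_\infty(L_n,f,t)\trianglelefteq G_\infty(K,f,t)$. Sections $g|_v\in\mathrm{Aut}~T$ are taken with respect to the self-similar structure on $G_\infty(K,f,t)$ induced by a choice of paths, i.e. $K^{\mathrm{sep}}$-isomorphisms $\lambda_v:K(t_v)^{\mathrm{sep}}\to K(t)^{\mathrm{sep}}$ with $t_v\mapsto t$ for each vertex (preimage) $t_v$, which identify the subtree below $t_v$ with $T$; with this identification $g|_v=\lambda_v^{-1}g_v\lambda_{v^g}$, where $g_v$ is the restriction of $g$ to $K_\infty(f,t_v)$. *)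

(* Defs.v *)
From HB Require Import structures.
From mathcomp Require Import all_boot all_order all_algebra all_field.
Set Implicit Arguments. Unset Strict Implicit. Unset Printing Implicit Defensive.
Import GRing.Theory.
Local Open Scope ring_scope.

Section Defs.
Variable F : fieldType.   (* F plays the role of the big field Omega = K(t)^sep *)

Definition is_subfield (S : F -> Prop) : Prop :=
  [/\ S 0, S 1,
      (forall x y, S x -> S y -> S (x - y)),
      (forall x y, S x -> S y -> S (x * y)) &
      (forall x, S x -> S x^-1)].

Definition gen (A : F -> Prop) (x : F) : Prop :=
  forall S, is_subfield S -> (forall y, A y -> S y) -> S x.

Definition coefs_in (S : F -> Prop) (p : {poly F}) : Prop := forall i, S p`_i.

Definition sep_alg_over (S : F -> Prop) (x : F) : Prop :=
  exists p : {poly F}, [/\ p != 0, coefs_in S p, separable_poly p & root p x].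

Definition transcendental_over (S : F -> Prop) (x : F) : Prop :=
  forall p : {poly F}, p != 0 -> coefs_in S p -> ~~ root p x.

Definition sep_closed : Prop :=
  forall p : {poly F}, (1 < size p)%N -> separable_poly p -> exists x, root p x.

Definition is_sep_closure_of (S : F -> Prop) : Prop :=
  sep_closed /\ forall x, sep_alg_over S x.

Definition is_aut (s : F -> F) : Prop :=
  [/\ (forall x y, s (x + y) = s x + s y),
      (forall x y, s (x * y) = s x * s y),
      s 1 = 1 & bijective s].

Definition adjoin (K : F -> Prop) (t : F) : F -> Prop :=
  gen (fun y => K y \/ y = t).

(* The rational function f = P/Q.  vert P Q t m x : x is in f^{-m}(t). *)
Fixpoint vert (P Q : {poly F}) (t : F) (m : nat) (x : F) : Prop :=
  match m with
  | 0 => x = t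
  | m'.+1 => Q.[x] != 0 /\ vert P Q t m' (P.[x] / Q.[x])
  end.

(* Vertices of T are pairs (level, element). *)
Definition is_vertex (P Q : {poly F}) (t : F) (v : nat * F) : Prop :=
  vert P Q t v.1 v.2.

(* levels up to n, with n = None meaning infinity *)
Definition lev_le (m : nat) (n : option nat) : Prop :=
  match n with Some n => (m <= n)%N | None => True end.

Definition Kn (K : F -> Prop) (P Q : {poly F}) (t : F) (n : option nat) : F -> Prop :=
  gen (fun y => K y \/ y = t \/ exists m, lev_le m n /\ vert P Q t m y).

Definition Ksep (K : F -> Prop) : F -> Prop := sep_alg_over K.

Definition Ln (K : F -> Prop) (P Q : {poly F}) (t : F) (n : option nat) : F -> Prop :=
  fun x => Ksep K x /\ Kn K P Q t n x.

(* G_oo(L,f,t): maps on vertices induced by some automorphism of F = L(t)^sep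
   fixing L(t) pointwise.  Membership is tested on the vertices of T. *)
Definition Ginf (L : F -> Prop) (P Q : {poly F}) (t : F)
  (g : nat * F -> nat * F) : Prop :=
  exists s : F -> F,
    [/\ is_aut s, (forall a, adjoin L t a -> s a = a) &
        forall v, is_vertex P Q t v -> g v = (v.1, s v.2)].

(* A choice of paths: for each vertex v = t_v, a K^sep-automorphism lam v of
   F = K(t_v)^sep = K(t)^sep with lam v t_v = t, and lami v its inverse. *)
Definition paths (K : F -> Prop) (P Q : {poly F}) (t : F)
  (lam lami : nat * F -> F -> F) : Prop :=
  forall v, is_vertex P Q t v ->
    [/\ is_aut (lam v), cancel (lam v) (lami v), cancel (lami v) (lam v),
        (forall a, Ksep K a -> lam v a = a) & lam v v.2 = t].

(* section g|_v = lam_v^{-1} g_v lam_{v^g} (right actions), evaluated at a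
   vertex u of T *)
Definition section (lam lami : nat * F -> F -> F) (g : nat * F -> nat * F)
  (v u : nat * F) : nat * F :=
  let z := lami v u.2 in
  (u.1, lam (g v) (g (v.1 + u.1, z)%N).2).

Definition GnK (K : F -> Prop) (P Q : {poly F}) (t : F)
  (lam lami : nat * F -> F -> F) (n : option nat) (g : nat * F -> nat * F) : Prop :=
  Ginf K P Q t g /\
  forall v w, is_vertex P Q t v -> is_vertex P Q t w ->
    (* (g|_v)(g|_w)^{-1} ∈ G_oo(L_n,f,t), i.e. g|_v = h (g|_w) for some h *)
    exists h, Ginf (Ln K P Q t n) P Q t h /\
      forall u, is_vertex P Q t u -> section lam lami g v u = section lam lami g w (h u).

Definition lev_pos (n : option nat) : Prop :=
  match n with Some n => (1 <= n)%N | None => True end.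

End Defs.

(* Main.v *)
Require Import Defs.
From HB Require Import structures.
From mathcomp Require Import all_boot all_order all_algebra all_field.
Local Open Scope ring_scope.
Import GRing.Theory.

Section Helpers.
Set Implicit Arguments.
Variable F : fieldType.
Implicit Types (s : F -> F) (K : F -> Prop).

Lemma aut0 s : is_aut s -> s 0 = 0.
Proof.
case=> sD _ _ _.
have h : s 0 + s 0 = s 0 + 0 by rewrite -sD !addr0.
exact: (addrI _ h).
Qed.

Lemma autB s x y : is_aut s -> s (x - y) = s x - s y.
Proof.
move=> hs; have [sD _ _ _] := hs.
by apply/eqP; rewrite eq_sym subr_eq -sD subrK.
Qed.

Lemma aut_inj s : is_aut s -> injective s.
Proof. by case=> _ _ _ /bij_inj. Qed.

Lemma aut_neq0 s x : is_aut s -> x != 0 -> s x != 0.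
Proof.
move=> hs xn; apply: contra xn => /eqP h; apply/eqP.
by rewrite -(aut0 hs) in h; exact: (aut_inj hs x 0 h).
Qed.

Lemma autV s x : is_aut s -> s x^-1 = (s x)^-1.
Proof.
move=> hs; have [_ sM s1 _] := hs.
have [->|xn] := eqVneq x 0; first by rewrite invr0 aut0 // invr0.
have sxn : s x != 0 by apply: aut_neq0.
apply: (mulfI sxn); rewrite -sM mulfV // mulfV //.
Qed.

Lemma autX s x i : is_aut s -> s (x ^+ i) = (s x) ^+ i.
Proof.
move=> hs; have [_ sM s1 _] := hs.
by elim: i => [|i IH]; rewrite ?expr0 // !exprS sM IH.
Qed.

Lemma aut_horner s (p : {poly F}) x : is_aut s -> (forall i, s p`_i = p`_i) ->
  s p.[x] = p.[s x].
Proof.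
move=> hs hp; have [sD sM _ _] := hs.
rewrite !horner_coef.
rewrite (big_morph s sD (aut0 hs)).
by apply: eq_bigr => i _; rewrite sM hp autX.
Qed.

Lemma aut_vert s (P Q : {poly F}) a m x : is_aut s ->
  (forall i, s P`_i = P`_i) -> (forall i, s Q`_i = Q`_i) ->
  vert P Q a m x -> vert P Q (s a) m (s x).
Proof.
move=> hs hP hQ; have [_ sM _ _] := hs.
elim: m x => [|m IH] x /=; first by move=> ->.
case=> qn hv; split; first by rewrite -aut_horner // aut_neq0.
have h := IH _ hv; by rewrite sM (autV Q.[x] hs) (aut_horner P x hs hP) (aut_horner Q x hs hQ) in h.
Qed.

Lemma vert_trans (P Q : {poly F}) a b m k x :
  vert P Q a m x -> vert P Q b k a -> vert P Q b (k + m) x.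
Proof.
elim: m x => [|m IH] x /=; first by move=> -> ; rewrite addn0.
by case=> qn hv hb; rewrite addnS /=; split => //; apply: IH.
Qed.

Lemma aut_comp s1 s2 : is_aut s1 -> is_aut s2 -> is_aut (s1 \o s2).
Proof.
case=> aD aM a1 ab; case=> bD bM b1 bb; split => /=.
- by move=> x y; rewrite bD aD.
- by move=> x y; rewrite bM aM.
- by rewrite b1 a1.
- exact: bij_comp.
Qed.

Lemma aut_inv s si : is_aut s -> cancel s si -> cancel si s -> is_aut si.
Proof.
move=> hs c1 c2; have [sD sM s1 _] := hs; split.
- by move=> x y; apply: (aut_inj hs); rewrite sD !c2.
- by move=> x y; apply: (aut_inj hs); rewrite sM !c2.
- by apply: (aut_inj hs); rewrite c2.
- by exists s.
Qed.

Lemma fixed_subfield s : is_aut s -> is_subfield (fun x => s x = x).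
Proof.
move=> hs; have [sD sM s1 _] := hs; split => //.
- exact: aut0.
- by move=> x y hx hy; rewrite autB // hx hy.
- by move=> x y hx hy; rewrite sM hx hy.
- by move=> x hx; rewrite autV // hx.
Qed.

Lemma K_Ksep K a : is_subfield K -> K a -> Ksep K a.
Proof.
case=> K0 K1 KB _ _ Ka; exists ('X - a%:P); split.
- by rewrite monic_neq0 // monicXsubC.
- move=> i; rewrite coefB coefX coefC.
  case: i => [|[|i]] /=; rewrite ?subr0 ?sub0r.
  + by rewrite -sub0r; apply: KB.
  + by [].
  + by [].
- by have := separable_prod_XsubC [:: a]; rewrite big_seq1 /= => ->.
- by rewrite root_XsubC.
Qed.

Lemma aut_Ksep K s a : is_aut s -> (forall b, K b -> s b = b) ->
  Ksep K a -> Ksep K (s a).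
Proof.
move=> hs hK [p [pn pK ps pr]]; exists p; split => //.
rewrite /root -aut_horner //; first by rewrite (eqP pr) aut0.
by move=> i; apply: hK.
Qed.

End Helpers.

Theorem proposition3p2 (F : fieldType) (K : F -> Prop) (t : F) (P Q : {poly F})
  (lam lami : nat * F -> F -> F) (n : option nat) :
  is_subfield K ->
  transcendental_over K t ->
  is_sep_closure_of (adjoin K t) ->
  coefs_in K P -> coefs_in K Q -> Q != 0 -> coprimep P Q ->
  (2 <= (maxn (size P) (size Q)).-1)%N ->
  paths K P Q t lam lami ->
  lev_pos n ->
  forall g : nat * F -> nat * F,
    Ginf K P Q t g <-> GnK K P Q t lam lami n g.
Proof.
move=> hK _ _ hP hQ _ _ _ hpaths _ g; split; last by case.
move=> hg; split => //.
have [s [hs sfix hgs]] := hg.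
have sK : forall b, K b -> s b = b.
  by move=> b Kb; apply: sfix => S _ HS; apply: HS; left.
have st : s t = t by apply: sfix => S _ HS; apply: HS; right.
have lamK : forall v a, is_vertex P Q t v -> K a -> lam v a = a.
  by move=> v a /hpaths [_ _ _ h _] Ka; apply: h; apply: K_Ksep.
have lamiS : forall v a, is_vertex P Q t v -> Ksep K a -> lami v a = a.
  move=> v a /hpaths [_ c1 _ h _] Ka; by rewrite -{1}(h a Ka) c1.
have lamiA : forall v, is_vertex P Q t v -> is_aut (lami v).
  by move=> v /hpaths [h c1 c2 _ _]; apply: (aut_inv h).
have lamit : forall v, is_vertex P Q t v -> lami v t = v.2.
  by move=> v /hpaths [_ c1 _ _ h]; rewrite -h c1.
have gvert : forall v, is_vertex P Q t v -> is_vertex P Q t (g v).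
  move=> v hv; rewrite hgs //; rewrite /is_vertex /= -st.
  by apply: aut_vert => // i; apply: sK.
have shift : forall v u, is_vertex P Q t v -> is_vertex P Q t u ->
    is_vertex P Q t (v.1 + u.1, lami v u.2)%N.
  move=> v u hv hu; rewrite /is_vertex /=.
  apply: (@vert_trans _ P Q v.2) => //.
  rewrite -(lamit v hv); apply: aut_vert => //.
  - by apply: lamiA.
  - by move=> i; apply: lamiS => //; apply: K_Ksep.
  - by move=> i; apply: lamiS => //; apply: K_Ksep.
have secE : forall v u, is_vertex P Q t v -> is_vertex P Q t u ->
    section lam lami g v u = (u.1, lam (g v) (s (lami v u.2))).
  by move=> v u hv hu; rewrite /section (hgs (v.1 + u.1, lami v u.2)%N) //; apply: shift.
move=> v w hv hw.
have [si c1 c2] : bijective s by case: hs.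
have hsi : is_aut si by apply: (aut_inv hs).
pose sv := fun x => lam (g v) (s (lami v x)).
pose tau := fun x => lam w (si (lami (g w) (sv x))).
have [lvA _ _ lvS lvt] := hpaths _ (gvert v hv).
have [lwA _ c2w lwS lwt] := hpaths _ (gvert w hw).
have [lwA' c1w' c2w' lwS' lwt'] := hpaths _ hw.
have tauA : is_aut tau.
  apply: (aut_comp lwA'); apply: (aut_comp hsi);
  apply: (aut_comp (lamiA _ (gvert w hw))); apply: (aut_comp lvA);
  apply: (aut_comp hs); exact: lamiA.
have tauS : forall a, Ksep K a -> tau a = a.
  move=> a Ka.
  have e1 : lami v a = a by apply: lamiS.
  have Ks : Ksep K (s a) by apply: aut_Ksep.
  by rewrite /tau /sv e1 (lvS _ Ks) (lamiS (g w) _ (gvert w hw) Ks) c1 (lwS' _ Ka).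
have taut : tau t = t.
  have e : s v.2 = (g v).2 by rewrite hgs.
  rewrite /tau /sv (lamit v hv) e lvt (lamit _ (gvert w hw)) (hgs w hw) /=.
  by rewrite c1 lwt'.
exists (fun u => (u.1, tau u.2)); split.
  exists tau; split => //.
  move=> a Ha; apply: (Ha (fun x => tau x = x)); first exact: fixed_subfield.
  by move=> y [[hy _]|->] //; apply: tauS.
move=> u hu.
have hu' : is_vertex P Q t (u.1, tau u.2).
  rewrite /is_vertex /= -taut; apply: aut_vert => //.
  - by move=> i; apply: tauS; apply: K_Ksep.
  - by move=> i; apply: tauS; apply: K_Ksep.
rewrite secE // secE //=; congr (_, _).
by rewrite /tau c1w' c2 c2w.
Qed.
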